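(* Let $m,n\ge0$ with $m+n\ge 3$, and assume $\operatorname{char}K\ne2$ if $m+n=4$ and $\operatorname{char}K\ne3$ if $m+n=3$. Then the kernel of the universal central extension $\psi:\mathfrak{stl}(m,n,\mathcal A)\to\mathfrak{sl}(m,n,\mathcal A)$ in the category of Leibniz superalgebras is isomorphic (as a $K$-vector space) to $HH_1(\mathcal A)=\operatorname{Ker}d_1/\operatorname{Im}d_2$, where $d_1:\mathcal A\otimes\mathcal A\to\mathcal A$, $d_1(a_0\otimes a_1)=a_0a_1-a_1a_0$, and $d_2:\mathcal A^{\otimes3}\to\mathcal A\otimes\mathcal A$, $d_2(a_0\otimes a_1\otimes a_2)=a_0a_1\otimes a_2-a_0\otimes a_1a_2-a_1\otimes a_2a_0$.
   Context: Standing assumptions: $K$ is a field (the paper assumes throughout $\operatorname{char}K\ne 2,3$), and $\mathcal A$ is an associative unital $K$-algebra; tensor products over $K$. A Leibniz superalgebra is a $\mathbb Z_2$-graded $K$-space with a bilinear bracket respecting the grading and satisfying $[[a,b],c]=[a,[b,c]]-(-1)^{|a||b|}[b,[a,c]]$ for homogeneous elements. For $1\le i,j\le m+n$ put $\tau_{ij}=0$ if $i,j\le m$ or $i,j\ge m+1$, and $\tau_{ij}=1$ otherwise. $\mathfrak{gl}(m,n,\mathcal A)$: $(m+n)\times(m+n)$ matrices over $\mathcal A$, matrix unit $E_{ij}(a)$ of degree $\tau_{ij}$, bracket $[X,Y]=XY-(-1)^{\alpha\beta}YX$. $\mathfrak{sl}(m,n,\mathcal A)$ is the subsuperalgebra generated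 by the $E_{ij}(a)$, $i\ne j$. $\mathfrak{stl}(m,n,\mathcal A)$ is the Leibniz superalgebra generated by $v_{ij}(a)$, $1\le i\ne j\le m+n$, $a\in\mathcal A$, of degree $\tau_{ij}$, subject to: (1) $K$-linearity in $a$; (2) $[v_{ij}(a),v_{kl}(b)]=0$ if $i\ne l$, $j\ne k$; (3) $[v_{ij}(a),v_{kl}(b)]=v_{il}(ab)$ if $i\ne l$, $j=k$; (4) $[v_{ij}(a),v_{kl}(b)]=-(-1)^{\tau_{ij}\tau_{kl}}v_{kj}(ba)$ if $i=l$, $j\ne k$. $\psi$ is the homomorphism with $\psi(v_{ij}(a))=E_{ij}(a)$. *)

(* Defs.v *)
From HB Require Import structures.
From mathcomp Require Import all_boot all_order all_algebra.
Set Implicit Arguments. Unset Strict Implicit. Unset Printing Implicit Defensive.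
Import GRing.Theory.
Local Open Scope ring_scope.

Section Defs.
Variable K : fieldType.

(* A Z2-grading of V is encoded by the projection p0 onto the even part
   along the odd part: V_0 = {x | p0 x = x}, V_1 = {x | p0 x = 0}. *)
Definition homog (V : lmodType K) (p0 : V -> V) (b : bool) (x : V) : Prop :=
  if b then p0 x = 0 else p0 x = x.

Definition klinear (V W : lmodType K) (f : V -> W) : Prop :=
  forall (k : K) (x y : V), f (k *: x + y) = k *: f x + f y.

Definition is_grading (V : lmodType K) (p0 : V -> V) : Prop :=
  klinear p0 /\ (forall x, p0 (p0 x) = p0 x).

Definition is_bilinear (V W U : lmodType K) (h : V -> W -> U) : Prop :=
  (forall y, klinear (fun x => h x y)) /\ (forall x, klinear (h x)).

Definition is_trilinear (V W X U : lmodType K) (h : V -> W -> X -> U) : Prop :=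
  (forall y z, klinear (fun x => h x y z)) /\
  (forall x z, klinear (fun y => h x y z)) /\
  (forall x y, klinear (h x y)).

Definition is_leib_super (V : lmodType K) (p0 : V -> V) (br : V -> V -> V) : Prop :=
  [/\ is_grading p0,
      is_bilinear br,
      (forall (a b : bool) x y, homog p0 a x -> homog p0 b y ->
          homog p0 (a (+) b) (br x y))
    & (forall (a b c : bool) x y z,
          homog p0 a x -> homog p0 b y -> homog p0 c z ->
          br (br x y) z = br x (br y z) - ((-1) ^+ (a && b)) *: br y (br x z))].

Definition is_ls_hom (V W : lmodType K) (p0 : V -> V) (br : V -> V -> V)
    (q0 : W -> W) (br' : W -> W -> W) (f : V -> W) : Prop :=
  [/\ klinear f,
      (forall x y, f (br x y) = br' (f x) (f y))
    & (forall x, f (p0 x) = q0 (f x))].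

Variable A : algType K.

(* indices 1..m+n are represented by 'I_(m+n) (0-based); index i is in the
   first block iff i < m *)
Definition tau (m n : nat) (i j : 'I_(m + n)) : bool := (i < m)%N != (j < m)%N.

Definition stl_rel (m n : nat) (V : lmodType K) (p0 : V -> V) (br : V -> V -> V)
    (w : 'I_(m + n) -> 'I_(m + n) -> A -> V) : Prop :=
  [/\ (forall i j, i != j -> forall (k : K) (a b : A),
          w i j (k *: a + b) = k *: w i j a + w i j b),
      (forall i j, i != j -> forall a, homog p0 (tau i j) (w i j a)),
      (forall i j k l, i != j -> k != l -> i != l -> j != k -> forall a b,
          br (w i j a) (w k l b) = 0),
      (forall i j l, i != j -> j != l -> i != l -> forall a b,
          br (w i j a) (w j l b) = w i l (a * b))
    & (forall i j k, i != j -> k != i -> j != k -> forall a b,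
          br (w i j a) (w k i b) = - (((-1) ^+ (tau i j && tau k i)) *: w k j (b * a)))].

(* (L, p0, br, v) is the Leibniz superalgebra presented by generators v_ij(a)
   and relations (1)-(4), i.e. it satisfies the universal property of the
   presentation. *)
Definition is_stl (m n : nat) (L : lmodType K) (p0 : L -> L) (br : L -> L -> L)
    (v : 'I_(m + n) -> 'I_(m + n) -> A -> L) : Prop :=
  [/\ is_leib_super p0 br,
      stl_rel p0 br v
    & forall (M : lmodType K) (q0 : M -> M) (br' : M -> M -> M)
             (w : 'I_(m + n) -> 'I_(m + n) -> A -> M),
        is_leib_super q0 br' -> stl_rel q0 br' w ->
        exists f : L -> M,
          [/\ is_ls_hom p0 br q0 br' f,
              (forall i j a, i != j -> f (v i j a) = w i j a)
            & (forall g : L -> M, is_ls_hom p0 br q0 br' g ->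
                 (forall i j a, i != j -> g (v i j a) = w i j a) ->
                 forall x, g x = f x)]].

Definition mx_part (m n : nat) (b : bool) (X : 'M[A]_(m + n)) : 'M[A]_(m + n) :=
  \matrix_(i, j) (if tau i j == b then X i j else 0).

(* [X,Y] = XY - (-1)^{|X||Y|} YX on homogeneous parts, extended bilinearly *)
Definition superbr (m n : nat) (X Y : 'M[A]_(m + n)) : 'M[A]_(m + n) :=
  \sum_(a : bool) \sum_(b : bool)
     (mx_part a X *m mx_part b Y
        - ((-1) ^+ (a && b)) *: (mx_part b Y *m mx_part a X)).

Definition Eunit (m n : nat) (i j : 'I_(m + n)) (a : A) : 'M[A]_(m + n) :=
  \matrix_(p, q) (if (p == i) && (q == j) then a else 0).

Definition is_tensor2 (T : lmodType K) (t : A -> A -> T) : Prop :=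
  is_bilinear t /\
  forall (W : lmodType K) (h : A -> A -> W), is_bilinear h ->
    exists g : T -> W, [/\ klinear g, (forall a b, g (t a b) = h a b)
      & (forall g' : T -> W, klinear g' -> (forall a b, g' (t a b) = h a b) ->
           forall x, g' x = g x)].

Definition is_tensor3 (T : lmodType K) (t : A -> A -> A -> T) : Prop :=
  is_trilinear t /\
  forall (W : lmodType K) (h : A -> A -> A -> W), is_trilinear h ->
    exists g : T -> W, [/\ klinear g, (forall a b c, g (t a b c) = h a b c)
      & (forall g' : T -> W, klinear g' -> (forall a b c, g' (t a b c) = h a b c) ->
           forall x, g' x = g x)].

(* Ker d1 / Im d2 is isomorphic (as a K-space) to the subspace {z | P z} of V:
   there is a K-linear map from Ker d1 onto {z | P z} whose kernel is Im d2. *)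
Definition quot_iso (T2 T3 V : lmodType K) (d1 : T2 -> A) (d2 : T3 -> T2)
    (P : V -> Prop) : Prop :=
  exists g : T2 -> V,
    [/\ (forall (k : K) x y, d1 x = 0 -> d1 y = 0 -> g (k *: x + y) = k *: g x + g y),
        (forall x, d1 x = 0 -> P (g x)),
        (forall z, P z -> exists x, d1 x = 0 /\ g x = z)
      & (forall x, d1 x = 0 -> (g x = 0 <-> exists y, x = d2 y))].

End Defs.

(* Main.v *)
Require Import Defs.
From HB Require Import structures.
From mathcomp Require Import all_boot all_order all_algebra.
From Stdlib Require Import ClassicalEpsilon FunctionalExtensionality PropExtensionality.
Set Implicit Arguments. Unset Strict Implicit. Unset Printing Implicit Defensive.
Import GRing.Theory.
Local Open Scope ring_scope.


Definition pb (P : Prop) : bool := if excluded_middle_informative P then true else false.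
Lemma pbP (P : Prop) : reflect P (pb P).
Proof. rewrite /pb; case: excluded_middle_informative => h; constructor; done. Qed.

Record subsp (K : fieldType) (V : lmodType K) := Subsp {
  sp :> V -> Prop; sp0 : sp 0; spL : forall (k : K) x y, sp x -> sp y -> sp (k *: x + y) }.

Section SubL.
Variables (K : fieldType) (V : lmodType K) (P : subsp V).
Definition Pp : {pred V} := fun x => pb (P x).
Lemma Pp_closed : GRing.submod_closed Pp.
Proof.
split; first by apply/pbP; apply: sp0.
by move=> k x y /pbP hx /pbP hy; apply/pbP; apply: spL.
Qed.
HB.instance Definition _ := GRing.isSubmodClosed.Build K V Pp Pp_closed.
Record SubT := MkS { sv : V; sP : sv \in Pp }.
HB.instance Definition _ := [isSub for sv].
HB.instance Definition _ := [Choice of SubT by <:].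
HB.instance Definition _ := [SubChoice_isSubLmodule of SubT by <:].
Lemma svD (x y : SubT) : sv (x + y) = sv x + sv y. Proof. by []. Qed.
Lemma svZ (k : K) (x : SubT) : sv (k *: x) = k *: sv x. Proof. by []. Qed.
Lemma sv0 : sv (0 : SubT) = 0. Proof. by []. Qed.
Lemma svK (x : SubT) : P (sv x). Proof. by apply/pbP; case: x. Qed.
End SubL.


Section Quot.
Variables (K : fieldType) (V : lmodType K) (I : subsp V).
Let I0 : I 0 := sp0 I.
Let IL : forall (k : K) x y, I x -> I y -> I (k *: x + y) := @spL _ _ I.

Lemma IN x : I x -> I (- x).
Proof. move=> h; have := IL (-1) h I0; by rewrite addr0 scaleN1r. Qed.
Lemma ID x y : I x -> I y -> I (x + y).
Proof. move=> hx hy; have := IL 1 hx hy; by rewrite scale1r. Qed.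
Lemma IZ (k : K) x : I x -> I (k *: x).
Proof. move=> hx; have := IL k hx I0; by rewrite addr0. Qed.

Definition canon (x : V) : V := epsilon (inhabits (0:V)) (fun y => I (x - y)).
Lemma canon_spec x : I (x - canon x).
Proof. apply: (epsilon_spec (inhabits (0:V)) (fun y => I (x - y))). exists x; by rewrite subrr. Qed.
Lemma canon_eq x y : I (x - y) -> canon x = canon y.
Proof.
move=> h; rewrite /canon.
have -> : (fun z => I (x - z)) = (fun z => I (y - z)); last by [].
apply: functional_extensionality => z.
apply: propositional_extensionality; split => hz.
- have := ID (IN h) hz; by rewrite opprB addrA subrK.
- have := ID h hz; by rewrite addrA subrK.
Qed.
Lemma canon_idem x : canon (canon x) = canon x.
Proof. apply: canon_eq; have := IN (canon_spec x); by rewrite opprB. Qed.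

Record QT := MkQ { qval : V; qP : canon qval == qval }.
HB.instance Definition _ := [isSub for qval].
HB.instance Definition _ := [Choice of QT by <:].

Definition pi (x : V) : QT := MkQ (introT eqP (canon_idem x)).
Lemma pi_qval q : pi (qval q) = q.
Proof. apply: val_inj => /=; by apply/eqP; case: q. Qed.
Lemma pi_eq x y : (pi x = pi y) <-> I (x - y).
Proof.
split; last by move=> h; apply: val_inj => /=; apply: canon_eq.
move=> h; have : canon x = canon y by move: h => /(congr1 qval).
move=> e; have h1 := canon_spec x; have h2 := IN (canon_spec y).
have := ID h1 h2; by rewrite e opprB addrA subrK.
Qed.

Definition qadd (p q : QT) := pi (qval p + qval q).
Definition qopp (p : QT) := pi (- qval p).
Definition qzero := pi 0.
Definition qscale (k : K) (p : QT) := pi (k *: qval p).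

Lemma piD x y : pi (x + y) = qadd (pi x) (pi y).
Proof.
apply/pi_eq => /=.
have h1 := canon_spec x; have h2 := canon_spec y.
have := ID h1 h2; congr (sp I); rewrite opprD !addrA; congr (_ - _); rewrite -!addrA; congr (_ + _).
by rewrite addrC.
Qed.
Lemma piN x : pi (- x) = qopp (pi x).
Proof. apply/pi_eq => /=; have := IN (canon_spec x); by rewrite opprD opprK. Qed.
Lemma piZ k x : pi (k *: x) = qscale k (pi x).
Proof. apply/pi_eq => /=; have := IZ k (canon_spec x); by rewrite scalerBr. Qed.

Lemma qind (Pr : QT -> Prop) : (forall x, Pr (pi x)) -> forall q, Pr q.
Proof. by move=> h q; rewrite -(pi_qval q). Qed.

Lemma qaddA : associative qadd.
Proof. elim/qind => x; elim/qind => y; elim/qind => z; by rewrite -!piD addrA. Qed.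
Lemma qaddC : commutative qadd.
Proof. elim/qind => x; elim/qind => y; by rewrite -!piD addrC. Qed.
Lemma qadd0 : left_id qzero qadd.
Proof. elim/qind => x; by rewrite /qzero -!piD add0r. Qed.
Lemma qaddN : left_inverse qzero qopp qadd.
Proof. elim/qind => x; by rewrite -piN -piD addNr. Qed.

HB.instance Definition _ := GRing.isZmodule.Build QT qaddA qaddC qadd0 qaddN.

Lemma qscaleA a b (q : QT) : qscale a (qscale b q) = qscale (a * b) q.
Proof. elim/qind: q => x; by rewrite -!piZ scalerA. Qed.
Lemma qscale1 : left_id 1 qscale.
Proof. elim/qind => x; by rewrite -!piZ scale1r. Qed.
Lemma qscaleDr : right_distributive qscale (@GRing.add QT).
Proof. move=> a; elim/qind => x; elim/qind => y; rewrite /GRing.add /=. by rewrite -piD -!piZ -piD scalerDr. Qed.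
Lemma qscaleDl (q : QT) : {morph qscale^~ q : a b / a + b}.
Proof. elim/qind: q => x a b; rewrite /GRing.add /= -!piZ -piD; by rewrite scalerDl. Qed.

HB.instance Definition _ := GRing.Zmodule_isLmodule.Build K QT qscaleA qscale1 qscaleDr qscaleDl.

Lemma piL (k : K) x y : pi (k *: x + y) = k *: pi x + pi y.
Proof. by rewrite piD piZ. Qed.
Lemma pi0 x : (pi x = 0) <-> I x.
Proof. have -> : (0 : QT) = pi 0 by []. rewrite pi_eq subr0. done. Qed.
End Quot.

Section Leib.
Variables (K : fieldType) (V : lmodType K) (p0 : V -> V) (br : V -> V -> V).
Hypothesis H : is_leib_super p0 br.

Lemma kl_0 (W : lmodType K) (f : V -> W) : klinear f -> f 0 = 0.
Proof. move=> h; have e := h 1 0 0; rewrite !scale1r addr0 in e. by apply: (addrI (f 0)); rewrite addr0 -e. Qed.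
Lemma kl_D (W : lmodType K) (f : V -> W) : klinear f -> forall x y, f (x + y) = f x + f y.
Proof. move=> h x y; by have := h 1 x y; rewrite !scale1r. Qed.
Lemma kl_Z (W : lmodType K) (f : V -> W) : klinear f -> forall k x, f (k *: x) = k *: f x.
Proof. move=> h k x; by have := h k x 0; rewrite !addr0 (kl_0 h) addr0. Qed.
Lemma kl_N (W : lmodType K) (f : V -> W) : klinear f -> forall x, f (- x) = - f x.
Proof. move=> h x; by rewrite -scaleN1r (kl_Z h) scaleN1r. Qed.
Lemma kl_B (W : lmodType K) (f : V -> W) : klinear f -> forall x y, f (x - y) = f x - f y.
Proof. move=> h x y; by rewrite (kl_D h) (kl_N h). Qed.

Lemma brLl y : klinear (br^~ y). Proof. by case: H => _ [h _] _ _. Qed.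
Lemma brLr x : klinear (br x). Proof. by case: H => _ [_ h] _ _. Qed.
Lemma br0l y : br 0 y = 0. Proof. exact: (kl_0 (brLl y)). Qed.
Lemma br0r x : br x 0 = 0. Proof. exact: (kl_0 (brLr x)). Qed.
Lemma brDl x1 x2 y : br (x1 + x2) y = br x1 y + br x2 y. Proof. exact: (kl_D (brLl y)). Qed.
Lemma brDr x y1 y2 : br x (y1 + y2) = br x y1 + br x y2. Proof. exact: (kl_D (brLr x)). Qed.
Lemma brZl k x y : br (k *: x) y = k *: br x y. Proof. exact: (kl_Z (brLl y)). Qed.
Lemma brZr k x y : br x (k *: y) = k *: br x y. Proof. exact: (kl_Z (brLr x)). Qed.
Lemma brNl x y : br (- x) y = - br x y. Proof. exact: (kl_N (brLl y)). Qed.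
Lemma brNr x y : br x (- y) = - br x y. Proof. exact: (kl_N (brLr x)). Qed.
Lemma brBl x1 x2 y : br (x1 - x2) y = br x1 y - br x2 y. Proof. exact: (kl_B (brLl y)). Qed.
Lemma brBr x y1 y2 : br x (y1 - y2) = br x y1 - br x y2. Proof. exact: (kl_B (brLr x)). Qed.

Lemma p0L : klinear p0. Proof. by case: H => -[]. Qed.
Lemma p0id x : p0 (p0 x) = p0 x. Proof. by case: H => -[]. Qed.
Lemma homog_br a b x y : homog p0 a x -> homog p0 b y -> homog p0 (a (+) b) (br x y).
Proof. by case: H => _ _ h _; apply: h. Qed.

Lemma leib_any a b x y z : homog p0 a x -> homog p0 b y ->
  br (br x y) z = br x (br y z) - ((-1) ^+ (a && b)) *: br y (br x z).
Proof.
move=> hx hy; case: H => _ _ _ hL.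
have e : z = p0 z + (z - p0 z) by rewrite addrC subrK.
have h0 : homog p0 false (p0 z) by rewrite /homog p0id.
have h1 : homog p0 true (z - p0 z) by rewrite /homog (kl_B p0L) p0id subrr.
rewrite e; move: (p0 z) (z - p0 z) h0 h1 => z0 z1 h0 h1.
rewrite !(brDr) (hL _ _ _ _ _ _ hx hy h0) (hL _ _ _ _ _ _ hx hy h1).
by rewrite scalerDr opprD addrACA.
Qed.

Lemma leib_der a b x y z : homog p0 a x -> homog p0 b y ->
  br x (br y z) = br (br x y) z + ((-1) ^+ (a && b)) *: br y (br x z).
Proof. move=> hx hy; by rewrite (leib_any z hx hy) subrK. Qed.

Lemma homog_p0 a x : homog p0 a x -> p0 x = if a then 0 else x.
Proof. by case: a. Qed.
End Leib.

Inductive zx := ZA of nat | Z0 | ZD of zx & zx | ZN of zx.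

Fixpoint zev (V : zmodType) (env : nat -> V) (e : zx) : V :=
  match e with
  | ZA i => env i
  | Z0 => 0
  | ZD a b => zev env a + zev env b
  | ZN a => - zev env a
  end.

Fixpoint zc (e : zx) (i : nat) : int :=
  match e with
  | ZA j => if i == j then 1 else 0
  | Z0 => 0
  | ZD a b => zc a i + zc b i
  | ZN a => - zc a i
  end.

Fixpoint zmax (e : zx) : nat :=
  match e with
  | ZA j => j.+1
  | Z0 => 0
  | ZD a b => maxn (zmax a) (zmax b)
  | ZN a => zmax a
  end.

Lemma zev_sum (V : zmodType) (env : nat -> V) e k : (zmax e <= k)%N ->
  zev env e = \sum_(i < k) env i *~ zc e i.
Proof.
elim: e => [j|_|a iha b ihb|a iha] /=.
- move=> jk; rewrite (bigD1 (Ordinal jk)) //= eqxx mulr1z big1 ?addr0 // => i /negbTE.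
  by rewrite -val_eqE /= => ->.
- by rewrite big1 // => i _; rewrite mulr0z.
- rewrite geq_max => /andP[ha hb]; rewrite (iha ha) (ihb hb) -big_split /=.
  by apply: eq_bigr => i _; rewrite mulrzDr.
- move=> ha; rewrite (iha ha) -sumrN; apply: eq_bigr => i _; by rewrite mulrNz.
Qed.

Lemma zx_eq (V : zmodType) (env : nat -> V) e1 e2 :
  all (fun i => zc e1 i == zc e2 i) (iota 0 (maxn (zmax e1) (zmax e2))) ->
  zev env e1 = zev env e2.
Proof.
move=> /allP h.
rewrite (@zev_sum _ _ e1 (maxn (zmax e1) (zmax e2))) ?leq_maxl //.
rewrite (@zev_sum _ _ e2 (maxn (zmax e1) (zmax e2))) ?leq_maxr //.
apply: eq_bigr => i _; congr (_ *~ _); apply/eqP; apply: h.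
by rewrite mem_iota add0n ltn_ord.
Qed.

Ltac zindex t l :=
  lazymatch l with
  | ?x :: ?l' =>
    match constr:(tt) with
    | _ => let _ := match goal with _ => unify t x end in constr:(0%N)
    | _ => let k := zindex t l' in constr:(k.+1)
    end
  end.

Ltac zcollect t l :=
  lazymatch t with
  | ?a + ?b => let l1 := zcollect a l in zcollect b l1
  | - ?a => zcollect a l
  | 0 => l
  | _ => match l with
         | _ => let k := zindex t l in l
         | _ => constr:(t :: l)
         end
  end.

Ltac zreify t l :=
  lazymatch t with
  | ?a + ?b => let x := zreify a l in let y := zreify b l in constr:(ZD x y)
  | - ?a => let x := zreify a l in constr:(ZN x)
  | 0 => constr:(Z0)
  | _ => let k := zindex t l in constr:(ZA k)
  end.

Ltac zsolve :=
  lazymatch goal with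
  | |- @eq ?V ?lhs ?rhs =>
    let l0 := zcollect lhs (@nil V) in
    let l := zcollect rhs l0 in
    let e1 := zreify lhs l in
    let e2 := zreify rhs l in
    change (zev (fun i => nth 0 l i) e1 = zev (fun i => nth 0 l i) e2);
    apply: zx_eq; vm_compute; reflexivity
  end.


Inductive span (K : fieldType) (V : lmodType K) (P : V -> Prop) : V -> Prop :=
| sp_gen x : P x -> span P x
| sp_0 : span P 0
| sp_L (k : K) x y : span P x -> span P y -> span P (k *: x + y).

Section Span.
Variables (K : fieldType) (V : lmodType K).
Implicit Types P Q : V -> Prop.
Lemma span_D P x y : span P x -> span P y -> span P (x + y).
Proof. move=> hx hy; have := sp_L 1 hx hy; by rewrite scale1r. Qed.
Lemma span_Z P k x : span P x -> span P (k *: x).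
Proof. move=> hx; have := sp_L k hx (sp_0 P); by rewrite addr0. Qed.
Lemma span_N P x : span P x -> span P (- x).
Proof. move=> hx; have := span_Z (-1) hx; by rewrite scaleN1r. Qed.
Lemma span_B P x y : span P x -> span P y -> span P (x - y).
Proof. move=> hx hy; apply: span_D => //; exact: span_N. Qed.
Lemma span_mono P Q : (forall x, P x -> Q x) -> forall x, span P x -> span Q x.
Proof. move=> h x; elim => [y /h|//|k y z _ hy _ hz]; [exact: sp_gen|exact: sp_0|exact: sp_L]. Qed.
Lemma span_lin (W : lmodType K) P (Q : W -> Prop) (f : V -> W) : klinear f ->
  (forall x, P x -> span Q (f x)) -> forall x, span P x -> span Q (f x).
Proof.
move=> hf h x; elim => [y /h //| |k y z _ hy _ hz]; first by rewrite (kl_0 hf); exact: sp_0.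
by rewrite hf; exact: sp_L.
Qed.
Lemma span_idem P x : span (span P) x -> span P x.
Proof. elim => [//||k y z _ hy _ hz]; [exact: sp_0|exact: sp_L]. Qed.
Definition spanS P : subsp V := Subsp (@sp_0 _ _ P) (@sp_L _ _ P).
End Span.

Section SubspL.
Variables (K : fieldType) (V : lmodType K) (P : subsp V).
Lemma spD x y : P x -> P y -> P (x + y).
Proof. move=> hx hy; have := spL 1 hx hy; by rewrite scale1r. Qed.
Lemma spZ k x : P x -> P (k *: x).
Proof. move=> hx; have := spL k hx (sp0 P); by rewrite addr0. Qed.
Lemma spN x : P x -> P (- x).
Proof. move=> hx; have := spZ (-1) hx; by rewrite scaleN1r. Qed.
Lemma spB x y : P x -> P y -> P (x - y).
Proof. move=> hx hy; apply: spD => //; exact: spN. Qed.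
End SubspL.

Lemma sgn_sq (K : fieldType) (b : bool) : ((-1 : K) ^+ b) * ((-1) ^+ b) = 1.
Proof. by case: b; rewrite ?expr1 ?expr0 ?mulr1 ?mulrNN ?mulr1. Qed.

Lemma third (N : nat) (i j : 'I_N) : (3 <= N)%N -> exists k : 'I_N, k != i /\ k != j.
Proof.
move=> hN.
have h0 : (0 < N)%N by apply: leq_trans hN. have h1 : (1 < N)%N by apply: leq_trans hN.
have h2 : (2 < N)%N by [].
pose k0 := Ordinal h0; pose k1 := Ordinal h1; pose k2 := Ordinal h2.
case: (boolP ((k0 != i) && (k0 != j))) => [/andP[a b]|]; first by exists k0.
case: (boolP ((k1 != i) && (k1 != j))) => [/andP[a b]|]; first by exists k1.
move=> e1 e2; exists k2; move: e1 e2; rewrite -!val_eqE /= !negb_and !negbK.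
case: i j => [i hi] [j hj] /=.
by case/orP => /eqP e1; case/orP => /eqP e2; subst; rewrite ?eqE /=.
Qed.

Section Stl.
Variables (K : fieldType) (A : algType K) (m n : nat) (L : lmodType K)
  (p0 : L -> L) (br : L -> L -> L) (v : 'I_(m + n) -> 'I_(m + n) -> A -> L).
Hypotheses (HL : is_leib_super p0 br) (HR : stl_rel p0 br v) (hmn : (3 <= m + n)%N).
Local Notation I := 'I_(m + n).
Local Notation sgn b := ((-1 : K) ^+ b).

Lemma vLin i j : i != j -> klinear (v i j).
Proof. case: HR => hh _ _ _ _ ij k a b. rewrite hh //. Qed.
Lemma vH i j a : i != j -> homog p0 (tau i j) (v i j a).
Proof. by case: HR => _ h _ _ _ ij; apply: h. Qed.
Lemma R2 i j k l a b : i != j -> k != l -> i != l -> j != k -> br (v i j a) (v k l b) = 0.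
Proof. by case: HR => _ _ hh _ _ *; apply: hh. Qed.
Lemma R3 i j l a b : i != j -> j != l -> i != l -> br (v i j a) (v j l b) = v i l (a * b).
Proof. by case: HR => _ _ _ hh _ *; apply: hh. Qed.
Lemma R4 i j k a b : i != j -> k != i -> j != k ->
  br (v i j a) (v k i b) = - (sgn (tau i j && tau k i) *: v k j (b * a)).
Proof. by case: HR => _ _ _ _ hh *; apply: hh. Qed.

Lemma vv_gen p q x y c d : p != q -> x != y -> ~~ ((x == q) && (y == p)) ->
  br (v p q c) (v x y d) =
  if x == q then v p y (c * d) else if y == p then - (sgn (tau p q && tau x p) *: v x q (d * c))
  else 0.
Proof.
move=> pq xy nh; case: eqP => [exq|/eqP nxq].
- subst x; have yp : y != p by apply: contraNneq nh => ->; rewrite !eqxx.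
  by apply: R3; rewrite // eq_sym.
case: eqP => [eyp|/eqP nyp].
- subst y; apply: R4 => //; by rewrite eq_sym.
by apply: R2; rewrite // eq_sym.
Qed.

Definition isv z := exists x y d, x != y /\ z = v x y d.
Definition isvr (r : I) z := exists x y d, [/\ x != y, (x == r) || (y == r) & z = v x y d].
Definition SV := span isv.
Definition Vr r := span (isvr r).
Definition GenT z := isv z \/ exists i j k l a b, [/\ i != j, k != l & z = br (v i j a) (v k l b)].
Definition GT := span GenT.
Definition h i j a b := br (v i j a) (v j i b).

Lemma SV_v i j a : i != j -> SV (v i j a).
Proof. by move=> ij; apply: sp_gen; exists i, j, a. Qed.
Lemma Vr_v r i j a : i != j -> (i == r) || (j == r) -> Vr r (v i j a).
Proof. by move=> ij h; apply: sp_gen; exists i, j, a. Qed.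
Lemma Vr_SV r z : Vr r z -> SV z.
Proof. apply: span_mono => w [x [y [d [xy _ ->]]]]; by exists x, y, d. Qed.
Lemma SV_GT z : SV z -> GT z.
Proof. apply: span_mono => w hw; by left. Qed.
Lemma GT_vv i j k l a b : i != j -> k != l -> GT (br (v i j a) (v k l b)).
Proof. move=> ij kl; apply: sp_gen; right; by exists i, j, k, l, a, b. Qed.

Lemma vv_SV p q x y c d : p != q -> x != y -> ~~ ((x == q) && (y == p)) ->
  SV (br (v p q c) (v x y d)).
Proof.
move=> pq xy nh; rewrite vv_gen //.
case: eqP => [exq|nxq]; first by apply: SV_v; apply: contraNneq nh => ->; rewrite exq !eqxx.
case: eqP => [eyp|nyp]; last exact: sp_0.
apply/span_N/span_Z/SV_v; apply/eqP => e; apply: nxq; by rewrite e.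
Qed.

Lemma vv_Vr r p q x y c d : r != p -> r != q -> p != q -> x != y -> (x == r) || (y == r) ->
  Vr r (br (v p q c) (v x y d)).
Proof.
move=> rp rq pq xy hr.
have nh : ~~ ((x == q) && (y == p)).
  apply/negP => /andP[/eqP ex /eqP ey]; subst; move: hr; by rewrite ![_ == r]eq_sym (negbTE rp) (negbTE rq).
rewrite vv_gen //.
case: eqP => [exq|nxq].
  subst x; apply: Vr_v; first by apply: contraNneq nh => ->; rewrite !eqxx.
  by move: hr; rewrite [q == r]eq_sym (negbTE rq) /= => ->; rewrite orbT.
case: eqP => [eyp|nyp]; last exact: sp_0.
subst y; apply/span_N/span_Z/Vr_v; first by apply/eqP => e; apply: nxq.
by move: hr; rewrite [p == r]eq_sym (negbTE rp) orbF => ->.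
Qed.

Lemma VrL r p q c z : r != p -> r != q -> p != q -> Vr r z -> Vr r (br (v p q c) z).
Proof.
move=> rp rq pq; apply: span_lin; first exact: (@brLr _ _ _ _ HL _).
move=> w [x [y [d [xy hr ->]]]]; exact: vv_Vr.
Qed.

Lemma VrR r p q c z : r != p -> r != q -> p != q -> Vr r z -> Vr r (br z (v p q c)).
Proof.
move=> rp rq pq; apply: (@span_lin _ _ _ _ _ (br^~ (v p q c))); first exact: (@brLl _ _ _ _ HL (v p q c)).
move=> w [x [y [d [xy hr ->]]]].
have nh : ~~ ((p == y) && (q == x)).
  apply/negP => /andP[/eqP ex /eqP ey]; subst; move: hr; by rewrite ![_ == r]eq_sym (negbTE rp) (negbTE rq).
rewrite vv_gen //.
case: eqP => [epy|npy].
  subst p; apply: Vr_v; first by apply: contraNneq nh => ->; rewrite !eqxx.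
  by move: hr; rewrite [y == r]eq_sym (negbTE rp) orbF => ->.
case: eqP => [eqx|nqx]; last exact: sp_0.
subst q; apply/span_N/span_Z/Vr_v; first by apply/eqP => e; apply: npy; rewrite e.
by move: hr; rewrite [x == r]eq_sym (negbTE rq) /= => ->; rewrite orbT.
Qed.

Lemma h_homog p q c a : p != q -> homog p0 (tau p q (+) tau q p) (h p q c a).
Proof. move=> pq; apply: (homog_br HL); apply: vH => //; by rewrite eq_sym. Qed.

Lemma HVr r p q c a z : r != p -> r != q -> p != q -> Vr r z -> Vr r (br (h p q c a) z).
Proof.
move=> rp rq pq hz; rewrite /h (leib_any HL z (vH c pq) (vH a _)); last by rewrite eq_sym.
apply: span_B; first by apply: VrL => //; apply: VrL => //; rewrite eq_sym.
apply: span_Z; apply: VrL => //; [rewrite eq_sym // | by apply: VrL].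
Qed.

Lemma VHr r p q c b z : r != p -> r != q -> p != q -> Vr r z -> Vr r (br z (h p q c b)).
Proof.
move=> rp rq pq; apply: (@span_lin _ _ _ _ _ (br^~ (h p q c b))); first exact: (@brLl _ _ _ _ HL (h p q c b)).
move=> w [x [y [d [xy hr ->]]]].
rewrite /h (leib_der HL _ (vH d xy) (vH c pq)).
have qp : q != p by rewrite eq_sym.
apply: span_D.
  apply: VrR => //; apply: VrR => //; exact: Vr_v.
apply: span_Z; apply: VrL => //; apply: VrR => //; exact: Vr_v.
Qed.

Lemma SVvGT z k l b : k != l -> SV z -> GT (br z (v k l b)).
Proof.
move=> kl; apply: (@span_lin _ _ _ _ _ (br^~ (v k l b))); first exact: (@brLl _ _ _ _ HL (v k l b)).
move=> w [x [y [d [xy ->]]]]; exact: GT_vv.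
Qed.
Lemma vSVGT z k l b : k != l -> SV z -> GT (br (v k l b) z).
Proof.
move=> kl; apply: span_lin; first exact: (@brLr _ _ _ _ HL _).
move=> w [x [y [d [xy ->]]]]; exact: GT_vv.
Qed.

Lemma vsplit i j r a : i != j -> r != i -> r != j -> v i j a = br (v i r a) (v r j 1).
Proof. move=> ij ri rj; rewrite R3 ?mulr1 // eq_sym //. Qed.

Lemma HV p q c a k l b : p != q -> k != l -> GT (br (h p q c a) (v k l b)).
Proof.
move=> pq kl; have qp : q != p by rewrite eq_sym.
case: (boolP (((k == p) && (l == q)) || ((k == q) && (l == p)))) => hard.
- have [r [rp rq]] := third p q hmn.
  have [rk rl] : r != k /\ r != l.
    by case/orP: hard => /andP[/eqP -> /eqP ->].
  have kr : k != r by rewrite eq_sym.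
  rewrite (vsplit b kl rk rl).
  rewrite (leib_der HL _ (h_homog c a pq) (vH b kr)).
  apply: span_D.
    apply: SVvGT => //.
    apply: (@Vr_SV r); apply: HVr => //; apply: Vr_v; rewrite ?eqxx ?orbT //.
  apply: span_Z; apply: vSVGT => //.
  apply: (@Vr_SV r); apply: HVr => //; apply: Vr_v; rewrite ?eqxx //.
- rewrite /h (leib_any HL _ (vH c pq) (vH a qp)).
  move: hard; rewrite negb_or => /andP[h1 h2].
  apply: span_B; first (apply: vSVGT => //; apply: vv_SV => //).
  apply: span_Z; apply: vSVGT => //.
  by apply: vv_SV.
Qed.

Lemma VH i j a p q c b : i != j -> p != q -> GT (br (v i j a) (h p q c b)).
Proof.
move=> ij pq; have qp : q != p by rewrite eq_sym.
case: (boolP ((p == i) && (q == j))) => hard.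
- case/andP: hard => /eqP ep /eqP eq; subst p q.
  have [r [ri rj]] := third i j hmn.
  have ir : i != r by rewrite eq_sym.
  rewrite (vsplit a ij ri rj).
  rewrite (leib_any HL _ (vH a ir) (vH 1 rj)).
  apply: span_B.
    apply: vSVGT => //; apply: (@Vr_SV r); apply: VHr => //; apply: Vr_v; rewrite ?eqxx //.
  apply: span_Z; apply: vSVGT => //; apply: (@Vr_SV r); apply: VHr => //.
  apply: Vr_v; rewrite ?eqxx ?orbT //.
- rewrite /h (leib_der HL _ (vH a ij) (vH c pq)).
  apply: span_D.
    case: (boolP ((p == j) && (q == i))) => h2.
      case/andP: h2 => /eqP ep /eqP eq; subst p q; exact: HV.
    apply: SVvGT => //; exact: vv_SV.
  apply: span_Z; apply: vSVGT => //; apply: vv_SV => //.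
  by rewrite andbC.
Qed.

Lemma T_left p q c t : p != q -> GT t -> GT (br (v p q c) t).
Proof.
move=> pq; apply: span_lin; first exact: (@brLr _ _ _ _ HL _).
move=> w [[i [j [a [ij ->]]]]|[i [j [k [l [a [b [ij kl ->]]]]]]]]; first exact: GT_vv.
rewrite (leib_der HL _ (vH c pq) (vH a ij)).
apply: span_D.
  case: (boolP ((i == q) && (j == p))) => h1.
    case/andP: h1 => /eqP ei /eqP ej; subst i j; exact: HV.
  apply: SVvGT => //; exact: vv_SV.
apply: span_Z.
case: (boolP ((k == q) && (l == p))) => h2.
  case/andP: h2 => /eqP ek /eqP el; subst k l; exact: VH.
apply: vSVGT => //; exact: vv_SV.
Qed.

Lemma GT_br s t : GT s -> GT t -> GT (br s t).
Proof.
move=> hs ht; move: s hs; apply: (@span_lin _ _ _ _ _ (br^~ t)); first exact: (@brLl _ _ _ _ HL t).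
move=> w [[i [j [a [ij ->]]]]|[i [j [k [l [a [b [ij kl ->]]]]]]]]; first exact: T_left.
rewrite (leib_any HL _ (vH a ij) (vH b kl)).
apply: span_B; first by apply: T_left => //; apply: T_left.
by apply: span_Z; apply: T_left => //; apply: T_left.
Qed.

Lemma homog_sp (P : L -> Prop) a x : homog p0 a x -> span P x -> span P (p0 x).
Proof. by case: a => /= ->; [move=> _; exact: sp_0|]. Qed.

Lemma GT_p0 t : GT t -> GT (p0 t).
Proof.
apply: span_lin; first exact: (p0L HL).
move=> w [[i [j [a [ij ->]]]]|[i [j [k [l [a [b [ij kl ->]]]]]]]].
  apply: homog_sp (vH a ij) _; exact: SV_GT (SV_v a ij).
apply: homog_sp (homog_br HL (vH a ij) (vH b kl)) _; exact: GT_vv.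
Qed.

Definition PS : subsp L := spanS GenT.
Definition mkS (x : L) (hx : GT x) : SubT PS := @MkS _ _ PS x (introT (pbP _) hx).
Definition p0S (s : SubT PS) : SubT PS := mkS (GT_p0 (svK s)).
Definition brS (s t : SubT PS) : SubT PS := mkS (GT_br (svK s) (svK t)).
Lemma GT_w i j a : GT (if i != j then v i j a else 0).
Proof. case: ifP => ij; [exact: SV_GT (SV_v a ij)|exact: sp_0]. Qed.
Definition wS i j a : SubT PS := mkS (GT_w i j a).

Lemma sval_inj : injective (@sv _ _ PS).
Proof. exact: val_inj. Qed.

Lemma homogS a s : homog p0S a s <-> homog p0 a (sv s).
Proof.
case: a => /=; split => [e|e].
- by rewrite -[p0 _]/(sv (p0S s)) e.
- by apply: sval_inj; rewrite /= e.
- by rewrite -[p0 _]/(sv (p0S s)) e.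
- by apply: sval_inj; rewrite /= e.
Qed.

Lemma leibS : is_leib_super p0S brS.
Proof.
split.
- split.
    move=> k x y; apply: sval_inj => /=; exact: (p0L HL).
  move=> x; apply: sval_inj => /=; exact: (p0id HL).
- split.
    move=> y k x1 x2; apply: sval_inj => /=; exact: (brLl HL).
  move=> x k y1 y2; apply: sval_inj => /=; exact: (brLr HL).
- move=> a b x y /homogS hx /homogS hy; apply/homogS; exact: (homog_br HL hx hy).
- move=> a b c x y z /homogS hx /homogS hy /homogS hz; apply: sval_inj => /=.
  by case: HL => _ _ _ hh; apply: hh hx hy hz.
Qed.

Lemma wS_v i j a : i != j -> sv (wS i j a) = v i j a.
Proof. by move=> ij; rewrite /= ij. Qed.

Lemma relS : stl_rel p0S brS wS.
Proof.
split.
- move=> i j ij k a b; apply: sval_inj; rewrite svD svZ !wS_v //; exact: vLin.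
- move=> i j ij a; apply/homogS; rewrite wS_v //; exact: vH.
- move=> i j k l ij kl il jk a b; apply: sval_inj => /=; rewrite ij kl; exact: R2.
- move=> i j l ij jl il a b; apply: sval_inj => /=; rewrite ij jl il; exact: R3.
- move=> i j k ij ki jk a b; apply: sval_inj => /=.
  rewrite ij ki (_ : k != j) ?R4 //; by rewrite eq_sym.
Qed.

Lemma generation : is_stl p0 br v -> forall z, GT z.
Proof.
move=> [_ _ HU] z.
have [f [[fl fbr fp] fv _]] := HU _ _ _ _ leibS relS.
have [f0 [_ _ f0u]] := HU _ _ _ _ HL HR.
have hg : is_ls_hom p0 br p0 br (fun x => sv (f x)).
  split.
  - by move=> k x y; rewrite fl.
  - by move=> x y; rewrite fbr.
  - by move=> x; rewrite fp.
have e1 := f0u _ hg (fun i j a ij => etrans (congr1 _ (fv i j a ij)) (wS_v a ij)) z.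
have hid : is_ls_hom p0 br p0 br id by split.
have e2 := f0u _ hid (fun i j a ij => erefl) z.
have : sv (f z) = z by rewrite e1 -e2.
move=> e; rewrite -e; exact: (svK (f z)).
Qed.

Lemma hLl i j b : i != j -> klinear (fun a => h i j a b).
Proof. move=> ij k x y; rewrite /h (vLin ij); exact: (brLl HL). Qed.
Lemma hLr i j a : i != j -> klinear (h i j a).
Proof. move=> ij k x y; rewrite /h (vLin (_ : j != i)) ?(brLr HL) //; by rewrite eq_sym. Qed.

Lemma genstar i j k a b c : i != j -> k != i -> k != j ->
  h i j (a * b) c = h i k a (b * c) +
     (sgn (tau i k && tau k j) * sgn (tau i k && tau j i)) *: h k j b (c * a).
Proof.
move=> ij ki kj; have ik : i != k by rewrite eq_sym.
have jk : j != k by rewrite eq_sym. have ji : j != i by rewrite eq_sym.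
rewrite /h -(R3 a b ik kj ij).
rewrite (leib_any HL _ (vH a ik) (vH b kj)).
rewrite (R3 b c kj ji ki) (R4 a c ik ji kj) (brNr HL) (brZr HL) scalerN opprK scalerA; congr (_ + _).
Qed.

Lemma genstar2 i j k a b : i != j -> k != i -> k != j ->
  h i j a b = h i k (a * b) 1 - (sgn (tau i j && tau j k) * sgn (tau i j && tau k i)) *: h j k b a.
Proof.
move=> ij ki kj; have ik : i != k by rewrite eq_sym.
have jk : j != k by rewrite eq_sym. have ji : j != i by rewrite eq_sym.
rewrite /h (vsplit b ji kj ki).
rewrite (leib_der HL _ (vH a ij) (vH b jk)).
rewrite (R3 a b ij jk ik) (R4 a 1 ij ki jk) (brNr HL) (brZr HL) scalerN scalerA mul1r.
by rewrite -/(h j k b a).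
Qed.

Lemma zmod4 (V : zmodType) (x1 x2 y1 y2 : V) : (x1 + y1) - (x1 + y2) - (x2 + y1) + (x2 + y2) = 0.
Proof.
rewrite (addrC x1) addrKA (addrC x2 y1) !opprD !addrA (addrAC y1 (-y2) (-y1)) subrr add0r.
by rewrite subrK addNr.
Qed.

Lemma add3ACA (V : zmodType) (a b c a' b' c' : V) :
  (a + b + c) + (a' + b' + c') = (a + a') + (b + b') + (c + c').
Proof. by rewrite (addrACA (a + b) c (a' + b') c') (addrACA a b a' b'). Qed.

Section WPart.
Variables (T2 : lmodType K) (t2 : A -> A -> T2) (g : T2 -> L) (o e : I).
Hypotheses (oe : o != e) (gl : klinear g)
  (gdef : forall a b, g (t2 a b) = h o e a b - h o e 1 (a * b)).

Definition W z := exists z1 x (c : I -> A), SV z1 /\ z = z1 + g x + \sum_(j | j != o) h o j 1 (c j).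

Lemma sum_h_lin k (c1 c2 : I -> A) :
  \sum_(j | j != o) h o j 1 (k *: c1 j + c2 j) =
  k *: \sum_(j | j != o) h o j 1 (c1 j) + \sum_(j | j != o) h o j 1 (c2 j).
Proof.
rewrite scaler_sumr -big_split /=; apply: eq_bigr => j jo.
have oj : o != j by rewrite eq_sym.
by rewrite (hLr 1 oj).
Qed.

Lemma W0 : W 0.
Proof.
exists 0, 0, (fun _ => 0); split; first exact: sp_0.
rewrite (kl_0 gl) !add0r big1 //; move=> j jo; have oj : o != j by rewrite eq_sym.
exact: (kl_0 (hLr 1 oj)).
Qed.

Lemma W_L k z1 z2 : W z1 -> W z2 -> W (k *: z1 + z2).
Proof.
move=> [y1 [x1 [c1 [s1 ->]]]] [y2 [x2 [c2 [s2 ->]]]].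
exists (k *: y1 + y2), (k *: x1 + x2), (fun j => k *: c1 j + c2 j); split; first exact: sp_L.
by rewrite sum_h_lin gl !scalerDr add3ACA.
Qed.

Definition WS : subsp L := Subsp W0 W_L.
Lemma WD x y : W x -> W y -> W (x + y). Proof. exact: (@spD _ _ WS x y). Qed.
Lemma WB x y : W x -> W y -> W (x - y). Proof. exact: (@spB _ _ WS x y). Qed.
Lemma WZ k x : W x -> W (k *: x). Proof. exact: (@spZ _ _ WS k x). Qed.

Lemma sgn2_sq (b1 b2 : bool) : (sgn b1 * sgn b2) * (sgn b1 * sgn b2) = 1.
Proof. by rewrite mulrACA !sgn_sq mulr1. Qed.
Lemma W_unscale (b1 b2 : bool) x : W ((sgn b1 * sgn b2) *: x) -> W x.
Proof. move=> hx; have := WZ (sgn b1 * sgn b2) hx; by rewrite scalerA sgn2_sq scale1r. Qed.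

Lemma W_SV z : SV z -> W z.
Proof.
move=> hz; exists z, 0, (fun _ => 0); split => //.
rewrite (kl_0 gl) addr0 big1 ?addr0 // => j jo.
have oj : o != j by rewrite eq_sym.
exact: (kl_0 (hLr 1 oj)).
Qed.

Lemma W_g x : W (g x).
Proof.
exists 0, x, (fun _ => 0); split; first exact: sp_0.
rewrite add0r big1 ?addr0 // => j jo.
have oj : o != j by rewrite eq_sym.
exact: (kl_0 (hLr 1 oj)).
Qed.

Lemma W_hoj j c : j != o -> W (h o j 1 c).
Proof.
move=> jo; exists 0, 0, (fun j' => if j' == j then c else 0); split; first exact: sp_0.
rewrite (kl_0 gl) !add0r (bigD1 j) //= eqxx big1 ?addr0 // => j' /andP[j'o j'j].
rewrite (negbTE j'j); have oj' : o != j' by rewrite eq_sym.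
exact: (kl_0 (hLr 1 oj')).
Qed.

Lemma W_hoe a b : W (h o e a b).
Proof.
have -> : h o e a b = g (t2 a b) + h o e 1 (a * b) by rewrite gdef subrK.
apply: WD; first exact: W_g.
apply: W_hoj; by rewrite eq_sym.
Qed.

Lemma F2 k j b : k != o -> j != o -> k != j -> W (h k j 1 b).
Proof.
move=> ko jo kj; have oj : o != j by rewrite eq_sym.
have := genstar 1 1 b oj ko kj; rewrite !mul1r mulr1 => E.
apply: (@W_unscale (tau o k && tau k j) (tau o k && tau j o)).
have -> : (sgn (tau o k && tau k j) * sgn (tau o k && tau j o)) *: h k j 1 b = h o j 1 b - h o k 1 b.
  by rewrite E [_ + _ *: _]addrC addrK.
apply: WB; exact: W_hoj.
Qed.

Lemma F3 j a b : j != o -> W (h o j a b).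
Proof.
move=> jo; case: (eqVneq j e) => [->|je]; first exact: W_hoe.
have oj : o != j by rewrite eq_sym.
have eo : e != o by rewrite eq_sym.
have := genstar a 1 b oj eo (_ : e != j); rewrite mulr1 mul1r => E.
rewrite E ?(eq_sym e j) //; apply: WD; first exact: W_hoe.
apply: WZ; apply: F2 => //; by rewrite eq_sym.
Qed.

Lemma F4 i k a b : i != o -> k != o -> i != k -> W (h i k b a).
Proof.
move=> io ko ik; have oi : o != i by rewrite eq_sym.
have ki : k != i by rewrite eq_sym.
have := genstar2 a b oi ko ki => E.
apply: (@W_unscale (tau o i && tau i k) (tau o i && tau k o)).
have -> : (sgn (tau o i && tau i k) * sgn (tau o i && tau k o)) *: h i k b a = h o k (a * b) 1 - h o i a b.
  by rewrite E opprB addrC subrK.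
apply: WB; exact: F3.
Qed.

Lemma F5 i a b : i != o -> W (h i o a b).
Proof.
move=> io; have [k [ko ki]] := third o i hmn.
have oi : o != i by rewrite eq_sym.
have ik : i != k by rewrite eq_sym.
have ok : o != k by rewrite eq_sym.
have := genstar a 1 b ik oi ok; rewrite mulr1 mul1r => E.
have -> : h i o a b = h i k a b - (sgn (tau i o && tau o k) * sgn (tau i o && tau k i)) *: h o k 1 (b * a).
  by rewrite E addrK.
apply: WB; first exact: F4.
apply: WZ; exact: W_hoj.
Qed.

Lemma W_h i j a b : i != j -> W (h i j a b).
Proof.
move=> ij; case: (eqVneq i o) => [eio|io]; first by subst i; apply: F3; rewrite eq_sym.
case: (eqVneq j o) => [->|jo]; first exact: F5.
exact: F4.
Qed.

Lemma W_GT z : GT z -> W z.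
Proof.
elim => [x [hx|[i [j [k [l [a [b [ij kl ->]]]]]]]]| |k x y _ hx _ hy].
- exact: W_SV (sp_gen hx).
- case: (boolP ((k == j) && (l == i))) => hard.
    case/andP: hard => /eqP -> /eqP ->; exact: W_h.
  exact: W_SV (vv_SV _ _ ij kl hard).
- exact: W0.
- exact: W_L.
Qed.

Lemma g_d2 a b c : g (t2 (a * b) c) - g (t2 a (b * c)) - g (t2 b (c * a)) = 0.
Proof.
have [k [ko ke]] := third o e hmn.
rewrite !gdef.
have P1 := genstar a b c oe ko ke.
have P2 := genstar a 1 (b * c) oe ko ke.
have P3 := genstar 1 b (c * a) oe ko ke.
have P4 := genstar 1 1 (b * (c * a)) oe ko ke.
rewrite !mulr1 !mul1r in P2 P3 P4.
rewrite !mulrA in P1 P2 P3 P4 *.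
rewrite opprB addrA subrK opprB addrA.
rewrite P1 P2 P3 (_ : h o e 1 (b * c * a) = h o k 1 (b * c * a) +
   (sgn (tau o k && tau k e) * sgn (tau o k && tau e o)) *: h k e 1 (b * c * a)); last by rewrite P4.
rewrite addrAC; exact: zmod4.
Qed.
End WPart.
End Stl.

Section Mx.
Variables (K : fieldType) (A : algType K) (m n : nat).
Local Notation I := 'I_(m + n).
Local Notation MX := 'M[A]_(m + n).

Lemma tauC (i j : I) : tau i j = tau j i. Proof. by rewrite /tau eq_sym. Qed.
Lemma tau_tr (i j k : I) : tau i k = tau i j (+) tau j k.
Proof. by rewrite /tau; case: (i < m)%N; case: (j < m)%N; case: (k < m)%N. Qed.
Lemma tau_ii (i : I) : tau i i = false. Proof. by rewrite /tau eqxx. Qed.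

Definition hmx (b : bool) (X : MX) := forall i j, tau i j != b -> X i j = 0.

Lemma mx_partE b (X : MX) i j : mx_part b X i j = if tau i j == b then X i j else 0.
Proof. by rewrite mxE. Qed.

Lemma mx_part_hmx b b' (X : MX) : hmx b X -> mx_part b' X = if b' == b then X else 0.
Proof.
move=> h; apply/matrixP => i j; rewrite mxE.
case: (eqVneq b' b) => [->|nb]; first by case: eqP => // /eqP ne; rewrite h.
rewrite mxE; case: eqP => // e; apply: h; by rewrite e.
Qed.

Lemma superbr_h a b (X Y : MX) : hmx a X -> hmx b Y ->
  superbr X Y = X *m Y - (-1) ^+ (a && b) *: (Y *m X).
Proof.
move=> hX hY; rewrite /superbr !big_bool /= !(mx_part_hmx _ hX) !(mx_part_hmx _ hY).
by case: a hX; case: b hY => hY hX /=;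
  rewrite ?mul0mx ?mulmx0 ?scaler0 ?subr0 ?addr0 ?add0r.
Qed.

Lemma hmx_mul a b (X Y : MX) : hmx a X -> hmx b Y -> hmx (a (+) b) (X *m Y).
Proof.
move=> hX hY i j nij; rewrite mxE big1 // => k _.
case: (eqVneq (tau i k) a) => [eik|nik]; last by rewrite hX // mul0r.
rewrite hY ?mulr0 //; apply: contra nij => /eqP ekj.
by rewrite (tau_tr i k j) eik ekj.
Qed.

Lemma hmx0 b : hmx b 0. Proof. by move=> i j _; rewrite mxE. Qed.
Lemma hmxD b (X Y : MX) : hmx b X -> hmx b Y -> hmx b (X + Y).
Proof. by move=> hX hY i j h; rewrite mxE hX ?hY ?addr0. Qed.
Lemma hmxZ b c (X : MX) : hmx b X -> hmx b (c *: X).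
Proof. by move=> hX i j h; rewrite mxE hX ?mulr0. Qed.
Lemma hmxN b (X : MX) : hmx b X -> hmx b (- X).
Proof. by move=> hX i j h; rewrite mxE hX ?oppr0. Qed.
Lemma hmxB b (X Y : MX) : hmx b X -> hmx b Y -> hmx b (X - Y).
Proof. by move=> hX hY; apply: hmxD => //; apply: hmxN. Qed.

Lemma hmx_superbr a b (X Y : MX) : hmx a X -> hmx b Y -> hmx (a (+) b) (superbr X Y).
Proof.
move=> hX hY; rewrite (superbr_h hX hY); apply: hmxB; first exact: hmx_mul.
by apply: hmxZ; rewrite addbC; apply: hmx_mul.
Qed.

Lemma sgnA (b : bool) (M : MX) : (-1) ^+ b *: M = if b then - M else M.
Proof. by case: b; rewrite ?expr1 ?expr0 ?scaleN1r ?scale1r. Qed.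

Lemma jacobi a b c (X Y Z : MX) : hmx a X -> hmx b Y -> hmx c Z ->
  superbr (superbr X Y) Z = superbr X (superbr Y Z) - (-1) ^+ (a && b) *: superbr Y (superbr X Z).
Proof.
move=> hX hY hZ.
rewrite (superbr_h (hmx_superbr hX hY) hZ) (superbr_h hX (hmx_superbr hY hZ)).
rewrite (superbr_h hY (hmx_superbr hX hZ)) (superbr_h hX hY) (superbr_h hY hZ) (superbr_h hX hZ).
rewrite !sgnA; clear hX hY hZ.
case: a; case: b; case: c => /=;
  rewrite ?(mulmxDl, mulmxDr, mulmxN, mulNmx, opprK, opprD, mulmxA); zsolve.
Qed.

Lemma Eunit_mul (i j k l : I) a b :
  Eunit i j a *m Eunit k l b = if j == k then Eunit i l (a * b) else (0 : MX).
Proof.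
apply/matrixP => p q; rewrite mxE; case: eqP => [<-|njk].
- rewrite mxE (bigD1 j) //= !mxE !eqxx andbT.
  rewrite big1 ?addr0; last by move=> r /negbTE nrj; rewrite !mxE nrj andbF mul0r.
  by case: (p == i); case: (q == l); rewrite /= ?mulr0 ?mul0r.
- rewrite mxE big1 // => r _; rewrite !mxE.
  case: (eqVneq r j) => [->|nrj]; last by rewrite andbF mul0r.
  by rewrite (_ : (j == k) = false) ?mulr0 ?andbF //; apply/eqP.
Qed.

Lemma hmx_E (i j : I) a : hmx (tau i j) (Eunit i j a).
Proof.
move=> p q h; rewrite mxE; case: andP => // -[/eqP ep /eqP eq]; subst.
by rewrite eqxx in h.
Qed.

Lemma superbr_E (i j k l : I) a b :
  superbr (Eunit i j a) (Eunit k l b) =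
  (if j == k then Eunit i l (a * b) else (0 : MX)) -
  (-1) ^+ (tau i j && tau k l) *: (if l == i then Eunit k j (b * a) else (0 : MX)).
Proof. by rewrite (superbr_h (hmx_E (i:=i) (j:=j) a) (hmx_E (i:=k) (j:=l) b)) !Eunit_mul. Qed.


Lemma mx_partD b (X Y : MX) : mx_part b (X + Y) = mx_part b X + mx_part b Y.
Proof. apply/matrixP => i j; rewrite !mxE; by case: ifP; rewrite ?addr0. Qed.
Lemma mx_partZ b c (X : MX) : mx_part b (c *: X) = c *: mx_part b X.
Proof. apply/matrixP => i j; rewrite !mxE; by case: ifP; rewrite ?mulr0. Qed.

Lemma mulmx_algr (k : K) (X Y : MX) : X *m (k%:A *: Y) = k%:A *: (X *m Y).
Proof.
apply/matrixP => i j; rewrite !mxE mulr_algl scaler_sumr; apply: eq_bigr => l _.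
by rewrite mxE mulr_algl scalerAr.
Qed.
Lemma mulmx_algl (k : K) (X Y : MX) : (k%:A *: X) *m Y = k%:A *: (X *m Y).
Proof. by rewrite -scalemxAl. Qed.
Lemma sgn_alg (b : bool) (k : K) (X : MX) : (-1) ^+ b *: (k%:A *: X) = k%:A *: ((-1) ^+ b *: X).
Proof. rewrite !scalerA; congr (_ *: _); have := commr_sign (k%:A) b; by move=> ->. Qed.

Lemma superbrDl (X1 X2 Y : MX) : superbr (X1 + X2) Y = superbr X1 Y + superbr X2 Y.
Proof.
rewrite /superbr -big_split; apply: eq_bigr => a _; rewrite -big_split; apply: eq_bigr => b _ /=.
by rewrite mx_partD mulmxDl mulmxDr scalerDr opprD addrACA.
Qed.
Lemma superbrDr (X Y1 Y2 : MX) : superbr X (Y1 + Y2) = superbr X Y1 + superbr X Y2.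
Proof.
rewrite /superbr -big_split; apply: eq_bigr => a _; rewrite -big_split; apply: eq_bigr => b _ /=.
by rewrite mx_partD mulmxDl mulmxDr scalerDr opprD addrACA.
Qed.
Lemma superbrZl (k : K) (X Y : MX) : superbr (k%:A *: X) Y = k%:A *: superbr X Y.
Proof.
rewrite /superbr scaler_sumr; apply: eq_bigr => a _; rewrite scaler_sumr; apply: eq_bigr => b _ /=.
by rewrite mx_partZ mulmx_algl mulmx_algr sgn_alg scalerBr.
Qed.
Lemma superbrZr (k : K) (X Y : MX) : superbr X (k%:A *: Y) = k%:A *: superbr X Y.
Proof.
rewrite /superbr scaler_sumr; apply: eq_bigr => a _; rewrite scaler_sumr; apply: eq_bigr => b _ /=.
by rewrite mx_partZ mulmx_algl mulmx_algr sgn_alg scalerBr.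
Qed.

Lemma mx_part_idem b (X : MX) : mx_part b (mx_part b X) = mx_part b X.
Proof. apply/matrixP => i j; rewrite !mxE; by case: ifP => // ->. Qed.
Lemma mx_part_hmx_self b (X : MX) : hmx b (mx_part b X).
Proof. move=> i j h; rewrite mxE; by rewrite (negbTE h). Qed.
Lemma mx_part_split (X : MX) : mx_part false X + mx_part true X = X.
Proof. apply/matrixP => i j; rewrite !mxE; by case: (tau i j); rewrite ?addr0 ?add0r. Qed.
End Mx.

Lemma kl_sum (K : fieldType) (V W : lmodType K) (f : V -> W) (I : finType) (F : I -> V) :
  klinear f -> f (\sum_i F i) = \sum_i f (F i).
Proof.
move=> hf; apply: (big_morph f (kl_D hf) (kl_0 hf)).
Qed.

Section MA.
Variables (K : fieldType) (A : algType K) (N : nat).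
Definition MA := 'M[A]_N.
HB.instance Definition _ := GRing.Zmodule.on MA.
Definition msc (k : K) (X : MA) : MA := k%:A *: (X : 'M[A]_N).
Lemma mscA a b (X : MA) : msc a (msc b X) = msc (a * b) X.
Proof. by rewrite /msc scalerA mulr_algl scalerA. Qed.
Lemma msc1 : left_id 1 msc.
Proof. by move=> X; rewrite /msc scale1r scale1r. Qed.
Lemma mscDr : right_distributive msc (@GRing.add MA).
Proof. by move=> k X Y; rewrite /msc scalerDr. Qed.
Lemma mscDl (X : MA) : {morph msc^~ X : a b / a + b}.
Proof. by move=> a b; rewrite /msc scalerDl scalerDl. Qed.
HB.instance Definition _ := GRing.Zmodule_isLmodule.Build K MA mscA msc1 mscDr mscDl.
Lemma MA_scaleE (k : K) (X : MA) : k *: X = (k%:A *: (X : 'M[A]_N) : MA).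
Proof. by []. Qed.
End MA.


Section Model.
Variables (K : fieldType) (A : algType K) (m n : nat) (T2 T3 : lmodType K)
  (t2 : A -> A -> T2) (t3 : A -> A -> A -> T3) (d2 : T3 -> T2).
Hypotheses (t2B : is_bilinear t2) (d2L : klinear d2)
  (d2_def : forall a0 a1 a2,
      d2 (t3 a0 a1 a2) = t2 (a0 * a1) a2 - t2 a0 (a1 * a2) - t2 a1 (a2 * a0)).
Local Notation I := 'I_(m + n).
Local Notation MX := 'M[A]_(m + n).

Lemma t2Ll y : klinear (t2^~ y). Proof. by case: t2B. Qed.
Lemma t2Lr x : klinear (t2 x). Proof. by case: t2B. Qed.
Lemma t20l y : t2 0 y = 0. Proof. exact: (kl_0 (t2Ll y)). Qed.
Lemma t20r x : t2 x 0 = 0. Proof. exact: (kl_0 (t2Lr x)). Qed.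

Definition sg (p : I) : K := (-1) ^+ (m <= p)%N.
Lemma sg_tau (p s : I) : sg p = (-1) ^+ (tau p s) * sg s.
Proof.
rewrite /sg /tau [(m <= p)%N]leqNgt [(m <= s)%N]leqNgt; case: (p < m)%N; case: (s < m)%N.
all: by rewrite /= ?expr0 ?expr1 ?mul1r ?mulr1 ?mulN1r ?opprK.
Qed.

Definition ct (X Y : MX) : T2 := \sum_(p : I) \sum_(r : I) sg p *: t2 (X p r) (Y r p).
Definition ct3 (X Y Z : MX) : T3 :=
  \sum_(p : I) \sum_(s : I) \sum_(r : I) sg p *: t3 (X p s) (Y s r) (Z r p).

Lemma t2_suml (F : I -> A) y : t2 (\sum_i F i) y = \sum_i t2 (F i) y.
Proof. exact: (kl_sum _ (t2Ll y)). Qed.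
Lemma t2_sumr x (F : I -> A) : t2 x (\sum_i F i) = \sum_i t2 x (F i).
Proof. exact: (kl_sum _ (t2Lr x)). Qed.

Lemma CT a (X Y Z : MX) : hmx a X ->
  ct (X *m Y) Z - ct X (Y *m Z) - (-1) ^+ a *: ct Y (Z *m X) = d2 (ct3 X Y Z).
Proof.
move=> hX.
have E1 : ct (X *m Y) Z = \sum_(p : I) \sum_(s : I) \sum_(r : I) sg p *: t2 (X p s * Y s r) (Z r p).
  rewrite /ct; apply: eq_bigr => p _.
  under eq_bigr => r _ do rewrite mxE t2_suml scaler_sumr.
  exact: exchange_big.
have E2 : ct X (Y *m Z) = \sum_(p : I) \sum_(s : I) \sum_(r : I) sg p *: t2 (X p s) (Y s r * Z r p).
  rewrite /ct; apply: eq_bigr => p _; apply: eq_bigr => s _.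
  by rewrite mxE t2_sumr scaler_sumr.
have E3 : (-1) ^+ a *: ct Y (Z *m X) =
    \sum_(p : I) \sum_(s : I) \sum_(r : I) sg p *: t2 (Y s r) (Z r p * X p s).
  rewrite /ct scaler_sumr.
  transitivity (\sum_(s : I) \sum_(r : I) \sum_(p : I) sg p *: t2 (Y s r) (Z r p * X p s)).
    apply: eq_bigr => s _; rewrite scaler_sumr; apply: eq_bigr => r _.
    rewrite mxE t2_sumr !scaler_sumr; apply: eq_bigr => p _.
    rewrite scalerA (sg_tau p s).
    case: (eqVneq (tau p s) a) => [->//|ne].
    by rewrite (hX _ _ ne) mulr0 t20r !scaler0.
  under eq_bigr => s _ do rewrite exchange_big /=.
  by rewrite exchange_big.
have E4 : d2 (ct3 X Y Z) = \sum_(p : I) \sum_(s : I) \sum_(r : I)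
    sg p *: (t2 (X p s * Y s r) (Z r p) - t2 (X p s) (Y s r * Z r p) - t2 (Y s r) (Z r p * X p s)).
  rewrite /ct3 (kl_sum _ d2L); apply: eq_bigr => p _.
  rewrite (kl_sum _ d2L); apply: eq_bigr => s _.
  rewrite (kl_sum _ d2L); apply: eq_bigr => r _.
  by rewrite (kl_Z d2L) d2_def.
rewrite E1 E2 E3 E4 -!sumrB; apply: eq_bigr => p _; rewrite -!sumrB; apply: eq_bigr => s _.
rewrite -!sumrB; apply: eq_bigr => r _.
by rewrite !scalerBr.
Qed.

Lemma ctDl (X1 X2 Y : MX) : ct (X1 + X2) Y = ct X1 Y + ct X2 Y.
Proof.
rewrite /ct -big_split; apply: eq_bigr => p _; rewrite -big_split; apply: eq_bigr => r _ /=.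
by rewrite mxE (kl_D (t2Ll _)) scalerDr.
Qed.
Lemma ctDr (X Y1 Y2 : MX) : ct X (Y1 + Y2) = ct X Y1 + ct X Y2.
Proof.
rewrite /ct -big_split; apply: eq_bigr => p _; rewrite -big_split; apply: eq_bigr => r _ /=.
by rewrite mxE (kl_D (t2Lr _)) scalerDr.
Qed.
Lemma ctZl (k : K) (X Y : MX) : ct (k%:A *: X) Y = k *: ct X Y.
Proof.
rewrite /ct scaler_sumr; apply: eq_bigr => p _; rewrite scaler_sumr; apply: eq_bigr => r _ /=.
by rewrite mxE mulr_algl (kl_Z (t2Ll _)) !scalerA mulrC.
Qed.
Lemma ctZr (k : K) (X Y : MX) : ct X (k%:A *: Y) = k *: ct X Y.
Proof.
rewrite /ct scaler_sumr; apply: eq_bigr => p _; rewrite scaler_sumr; apply: eq_bigr => r _ /=.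
by rewrite mxE mulr_algl (kl_Z (t2Lr _)) !scalerA mulrC.
Qed.
Lemma ctNl (X Y : MX) : ct (- X) Y = - ct X Y.
Proof.
rewrite /ct -sumrN; apply: eq_bigr => p _; rewrite -sumrN; apply: eq_bigr => r _.
by rewrite mxE (kl_N (t2Ll _)) scalerN.
Qed.
Lemma ctNr (X Y : MX) : ct X (- Y) = - ct X Y.
Proof.
rewrite /ct -sumrN; apply: eq_bigr => p _; rewrite -sumrN; apply: eq_bigr => r _.
by rewrite mxE (kl_N (t2Lr _)) scalerN.
Qed.

Lemma ct_zero a b (X Y : MX) : hmx a X -> hmx b Y -> a != b -> ct X Y = 0.
Proof.
move=> hX hY ab; rewrite /ct big1 // => p _; rewrite big1 // => r _.
case: (eqVneq (tau p r) a) => [e|ne]; last by rewrite (hX _ _ ne) t20l scaler0.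
rewrite (hY r p) ?t20r ?scaler0 // tauC e; by [].
Qed.

Lemma sgnK (b : bool) (v : T2) : (-1 : K) ^+ b *: v = if b then - v else v.
Proof. by case: b; rewrite ?expr1 ?expr0 ?scaleN1r ?scale1r. Qed.

Lemma cocycle a b c (X Y Z : MX) : hmx a X -> hmx b Y -> hmx c Z ->
  ct (superbr X Y) Z - (ct X (superbr Y Z) - (-1 : K) ^+ (a && b) *: ct Y (superbr X Z)) =
  d2 (ct3 X Y Z - (-1 : K) ^+ (a && b) *: ct3 Y X Z).
Proof.
move=> hX hY hZ.
rewrite (kl_B d2L) (kl_Z d2L) -(CT _ _ hX) -(CT _ _ hY).
rewrite (superbr_h hX hY) (superbr_h hY hZ) (superbr_h hX hZ) !sgnA.
have hZX := hmx_mul hZ hX; have hZY := hmx_mul hZ hY.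
move: hX hY hZ hZX hZY.
case: a; case: b; case: c => /= hX hY hZ hZX hZY;
  rewrite ?(ctDl, ctDr, ctNl, ctNr, opprK, opprD) ?sgnK ?expr1 ?expr0 ?scaleN1r ?scale1r;
  try (rewrite (ct_zero hY hZX); [|done]);
  try (rewrite (ct_zero hX hZY); [|done]);
  zsolve.
Qed.

Definition Imd2 (x : T2) := exists y, x = d2 y.
Lemma Imd2_0 : Imd2 0. Proof. exists 0; by rewrite (kl_0 d2L). Qed.
Lemma Imd2_L (k : K) x y : Imd2 x -> Imd2 y -> Imd2 (k *: x + y).
Proof. by move=> [x' ->] [y' ->]; exists (k *: x' + y'); rewrite d2L. Qed.
Definition ImS : subsp T2 := Subsp Imd2_0 Imd2_L.
Local Notation Q := (QT ImS).
Local Notation MM := (MA A (m + n) * Q)%type.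
Local Notation piQ := (pi ImS).

Lemma piB (x y : T2) : piQ (x - y) = piQ x - piQ y.
Proof.
have e := piL ImS (-1) y x; rewrite !scaleN1r in e.
by rewrite [x - y]addrC e addrC.
Qed.
Lemma piZ' (k : K) (x : T2) : piQ (k *: x) = k *: piQ x.
Proof. have := piL ImS k x 0; rewrite addr0 => ->. have -> : piQ 0 = 0 by []. by rewrite addr0. Qed.

Definition brM (x y : MM) : MM := ((superbr x.1 y.1 : MA A (m + n)), piQ (ct x.1 y.1)).
Definition p0M (x : MM) : MM := ((mx_part false x.1 : MA A (m + n)), x.2).
Definition wM (i j : I) (a : A) : MM := ((Eunit i j a : MA A (m + n)), 0).

Lemma MM_eq (x y : MM) : x.1 = y.1 -> x.2 = y.2 -> x = y.
Proof. by move: x y => [x1 x2] [y1 y2] /= -> ->. Qed.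

Lemma homogM a (x : MM) : homog p0M a x -> hmx a x.1 /\ (a -> x.2 = 0).
Proof.
case: a => /= h.
- have e1 : mx_part false x.1 = 0 by move: h => /(congr1 fst).
  have e2 : x.2 = 0 by move: h => /(congr1 snd).
  split; last by move=> _.
  have -> : x.1 = mx_part true x.1 by rewrite -{1}(mx_part_split x.1) e1 add0r.
  exact: mx_part_hmx_self.
- have e1 : mx_part false x.1 = x.1 by move: h => /(congr1 fst).
  split; last by [].
  rewrite -e1; exact: mx_part_hmx_self.
Qed.

Lemma homogM' a (x : MM) : hmx a x.1 -> (a -> x.2 = 0) -> homog p0M a x.
Proof.
case: a => /= h1 h2.
- apply: MM_eq => /=; last by rewrite h2.
  by rewrite (mx_part_hmx _ h1).
- apply: MM_eq => //=; by rewrite (mx_part_hmx _ h1).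
Qed.

Lemma sgnAK (b : bool) (M : MX) : ((-1 : K) ^+ b)%:A *: M = (-1) ^+ b *: M.
Proof. by case: b; rewrite ?expr1 ?expr0 ?scale1r // scaleN1r scaleN1r. Qed.

Lemma leibM : is_leib_super p0M brM.
Proof.
split.
- split.
    move=> k x y; apply: MM_eq => //=.
    by rewrite mx_partD mx_partZ.
  move=> x; apply: MM_eq => //=; exact: mx_part_idem.
- split.
    move=> y k x1 x2; apply: MM_eq => /=.
      by rewrite superbrDl superbrZl.
    by rewrite ctDl ctZl piL.
  move=> x k y1 y2; apply: MM_eq => /=.
    by rewrite superbrDr superbrZr.
  by rewrite ctDr ctZr piL.
- move=> a b x y /homogM [hx hx2] /homogM [hy hy2]; apply: homogM'.
    exact: hmx_superbr.
  move=> /= ab.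
  rewrite (ct_zero hx hy); first by [].
  by move: ab; case: a {hx hx2}; case: b {hy hy2}.
- move=> a b c x y z /homogM [hx _] /homogM [hy _] /homogM [hz _].
  apply: MM_eq => /=.
    rewrite (jacobi hx hy hz); congr (_ - _); by rewrite MA_scaleE sgnAK.
  apply/eqP; rewrite -piZ' -piB; apply/eqP; apply/pi_eq.
  rewrite (cocycle hx hy hz); by exists (ct3 x.1 y.1 z.1 - (-1) ^+ (a && b) *: ct3 y.1 x.1 z.1).
Qed.

Lemma Eunit_lin (i j : I) (k : K) (a b : A) :
  Eunit i j (k *: a + b) = k%:A *: Eunit i j a + Eunit i j b.
Proof. apply/matrixP => p q; rewrite !mxE; case: ifP => _. rewrite mulr_algl. done. by rewrite mulr0 addr0. Qed.

Lemma ct_E (i j k l : I) a b :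
  ct (Eunit i j a) (Eunit k l b) = if (k == j) && (l == i) then sg i *: t2 a b else 0.
Proof.
rewrite /ct (bigD1 i) //=.
rewrite [X in _ + X]big1 ?addr0; last first.
  move=> p hp; apply: big1 => r _; by rewrite mxE (negbTE hp) /= t20l scaler0.
rewrite (bigD1 j) //=.
rewrite [X in _ + X]big1 ?addr0; last first.
  move=> r hr; by rewrite mxE eqxx (negbTE hr) /= t20l scaler0.
rewrite !mxE !eqxx /=.
rewrite [j == k]eq_sym [i == l]eq_sym.
by case: ifP => _; rewrite ?t20r ?scaler0.
Qed.

Lemma relM : stl_rel p0M brM wM.
Proof.
split.
- move=> i j ij k a b; apply: MM_eq => /=; first by rewrite Eunit_lin.
  by rewrite scaler0 addr0.
- move=> i j ij a; apply: homogM' => //=; exact: hmx_E.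
- move=> i j k l ij kl il jk a b; apply: MM_eq => /=.
    by rewrite superbr_E (negbTE jk) (negbTE (_ : l != i)) ?scaler0 ?subr0 // eq_sym.
  by rewrite ct_E (negbTE (_ : k != j)) // eq_sym.
- move=> i j l ij jl il a b; apply: MM_eq => /=.
    by rewrite superbr_E eqxx (negbTE (_ : l != i)) ?scaler0 ?subr0 // eq_sym.
  by rewrite ct_E eqxx (negbTE (_ : l != i)) // eq_sym.
- move=> i j k ij ki jk a b; apply: MM_eq => /=.
    rewrite superbr_E (negbTE jk) eqxx sub0r; congr (- _).
    by rewrite MA_scaleE sgnAK.
  rewrite ct_E (negbTE (_ : k != j)); last by rewrite eq_sym.
  by rewrite /= scaler0 oppr0.
Qed.
End Model.

Lemma tensor2_ext (K : fieldType) (A : algType K) (T2 : lmodType K) (t2 : A -> A -> T2)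
  (hT2 : is_tensor2 t2) (W : lmodType K) (f1 f2 : T2 -> W) :
  klinear f1 -> klinear f2 -> (forall a b, f1 (t2 a b) = f2 (t2 a b)) -> forall x, f1 x = f2 x.
Proof.
move=> l1 l2 e x; case: hT2 => [[tl tr] U].
have hb : is_bilinear (fun a b => f2 (t2 a b)).
  split => [y|x'] k a b /=; [by rewrite tl l2 | by rewrite tr l2].
have [g0 [_ _ u]] := U W _ hb.
by rewrite (u f1 l1 e) (u f2 l2 (fun _ _ => erefl)).
Qed.

Lemma tensor3_ext (K : fieldType) (A : algType K) (T3 : lmodType K) (t3 : A -> A -> A -> T3)
  (hT3 : is_tensor3 t3) (W : lmodType K) (f1 f2 : T3 -> W) :
  klinear f1 -> klinear f2 -> (forall a b c, f1 (t3 a b c) = f2 (t3 a b c)) -> forall x, f1 x = f2 x.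
Proof.
move=> l1 l2 e x; case: hT3 => [[t1 [t2 t3']] U].
have hb : is_trilinear (fun a b c => f2 (t3 a b c)).
  split; [|split] => [y z|x' z|x' y] k a b /=; [by rewrite t1 l2|by rewrite t2 l2|by rewrite t3' l2].
have [g0 [_ _ u]] := U W _ hb.
by rewrite (u f1 l1 e) (u f2 l2 (fun _ _ _ => erefl)).
Qed.

Lemma sgnA_sq (R : ringType) (b : bool) : ((-1 : R) ^+ b) * ((-1) ^+ b) = 1.
Proof. by case: b; rewrite ?expr1 ?expr0 ?mulr1 ?mulrNN ?mulr1. Qed.

Section Final.
Variables (K : fieldType) (A : algType K) (m n : nat) (L : lmodType K)
  (p0 : L -> L) (br : L -> L -> L) (v : 'I_(m + n) -> 'I_(m + n) -> A -> L)
  (psi : L -> 'M[A]_(m + n)).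
Hypotheses (HS : is_stl p0 br v) (HL : is_leib_super p0 br) (HR : stl_rel p0 br v)
  (hmn : (3 <= m + n)%N)
  (psi_lin : forall (k : K) x y, psi (k *: x + y) = (k%:A) *: psi x + psi y)
  (psi_br : forall x y, psi (br x y) = superbr (psi x) (psi y))
  (psi_v : forall i j a, i != j -> psi (v i j a) = Eunit i j a).
Variables (T2 : lmodType K) (t2 : A -> A -> T2) (d1 : T2 -> A) (g : T2 -> L) (o e : 'I_(m + n)).
Hypotheses (oe : o != e) (gl : klinear g)
  (gdef : forall a b, g (t2 a b) = h br v o e a b - h br v o e 1 (a * b))
  (hT2 : is_tensor2 t2) (d1_lin : klinear d1)
  (d1_def : forall a0 a1, d1 (t2 a0 a1) = a0 * a1 - a1 * a0).
Local Notation I := 'I_(m + n).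
Local Notation MX := 'M[A]_(m + n).

Lemma psiL : klinear (psi : L -> MA A (m + n)).
Proof. move=> k x y; exact: psi_lin. Qed.

Lemma psi_sum (P : pred I) (F : I -> L) : psi (\sum_(j | P j) F j) = \sum_(j | P j) psi (F j).
Proof. exact: (big_morph (psi : L -> MA A (m + n)) (kl_D psiL) (kl_0 psiL)). Qed.

Lemma psi_h i j a b : i != j ->
  psi (h br v i j a b) = Eunit i i (a * b) - (-1) ^+ (tau i j && tau j i) *: Eunit j j (b * a).
Proof.
move=> ij; rewrite /h psi_br !psi_v // ?superbr_E ?eqxx //; by rewrite eq_sym.
Qed.

Lemma Eunit_B (i j : I) (a b : A) : Eunit i j (a - b) = Eunit i j a - Eunit i j b.
Proof. apply/matrixP => p q; rewrite !mxE; case: ifP => _; by rewrite ?subr0. Qed.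

Lemma psi_g x : psi (g x) = (-1) ^+ (tau o e && tau e o) *: Eunit e e (d1 x).
Proof.
pose f1 := fun x => (psi (g x) : MA A (m + n)).
pose f2 := fun x => ((-1) ^+ (tau o e && tau e o) *: Eunit e e (d1 x) : MA A (m + n)).
have l1 : klinear f1 by move=> k y z; rewrite /f1 gl psiL.
have l2 : klinear f2.
  move=> k y z; rewrite /f2 d1_lin Eunit_lin scalerDr; congr (_ + _).
  by rewrite MA_scaleE sgn_alg.
apply: (tensor2_ext hT2 l1 l2) => a b; rewrite /f1 /f2 gdef (kl_B psiL) !psi_h //.
rewrite d1_def Eunit_B !mul1r !mulr1 !sgnA.
by case: (tau o e && tau e o); zsolve.
Qed.

Lemma psi_entryL (k : K) x y p q : psi (k *: x + y) p q = k *: psi x p q + psi y p q.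
Proof. by rewrite psi_lin !mxE mulr_algl. Qed.

Lemma vsum0 : \sum_(p : I) \sum_(q | p != q) v p q 0 = 0.
Proof.
apply: big1 => p _; apply: big1 => q pq; exact: (kl_0 (vLin HR pq)).
Qed.

Lemma psi_SV z : SV v z -> (forall p, psi z p p = 0) /\
  z = \sum_(p : I) \sum_(q | p != q) v p q (psi z p q).
Proof.
elim => [x [i [j [a [ij ->]]]]| |k x y _ [hx ex] _ [hy ey]].
- rewrite psi_v //; split.
    move=> p; rewrite mxE; case: (eqVneq p i) => [epi|] //=.
    by subst p; rewrite (negbTE ij).
  rewrite (bigD1 i) //= (bigD1 j) //= big1 ?addr0; last first.
    move=> q /andP[iq qj]; rewrite mxE eqxx /= (negbTE qj); exact: (kl_0 (vLin HR iq)).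
  rewrite big1 ?addr0; last first.
    move=> p pi; apply: big1 => q pq; rewrite mxE (negbTE pi) /=; exact: (kl_0 (vLin HR pq)).
  by rewrite mxE !eqxx.
- rewrite (kl_0 psiL); split; first by move=> p; rewrite mxE.
  under eq_bigr => p _ do under eq_bigr => q _ do rewrite mxE.
  by rewrite vsum0.
- split; first by move=> p; rewrite psi_entryL hx hy scaler0 addr0.
  rewrite {1}ex {1}ey scaler_sumr -big_split; apply: eq_bigr => p _.
  rewrite scaler_sumr -big_split; apply: eq_bigr => q pq /=.
  by rewrite psi_entryL (vLin HR pq).
Qed.

Lemma diag_false (p q r : I) : p != q -> (p == r) && (q == r) = false.
Proof. move=> pq; apply/andP => -[/eqP ep /eqP eq]; move: pq; by rewrite ep eq eqxx. Qed.

Lemma sA_cancel (b : bool) (x : A) : (-1) ^+ b * x = 0 -> x = 0.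
Proof. move=> h; by rewrite -[x]mul1r -(sgnA_sq _ b) -mulrA h mulr0. Qed.

Lemma surj z : psi z = 0 -> exists x, d1 x = 0 /\ g x = z.
Proof.
move=> hz.
have [z1 [x [c [hz1 ez]]]] := W_GT HL HR hmn oe gl gdef (generation HL HR hmn HS z).
have [hd1 ez1] := psi_SV hz1.
pose s := fun j : I => (-1 : A) ^+ (tau o j && tau j o).
have ent : forall p q, psi z1 p q + (-1) ^+ (tau o e && tau e o) * (if (p == e) && (q == e) then d1 x else 0)
   + \sum_(j | j != o) ((if (p == o) && (q == o) then c j else 0)
                        - s j * (if (p == j) && (q == j) then c j else 0)) = 0.
  move=> p q; have := congr1 (fun M : MX => M p q) hz.
  rewrite ez (kl_D psiL) (kl_D psiL) psi_sum psi_g !mxE summxE => E; rewrite -[in RHS]E.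
  congr (_ + _); apply: eq_bigr => j jo; rewrite psi_h ?mul1r ?mulr1; last by rewrite eq_sym.
  by rewrite !mxE.
have off : forall p q, p != q -> psi z1 p q = 0.
  move=> p q pq; have := ent p q; rewrite !diag_false // mulr0 addr0 big1 ?addr0 // => j _.
  by rewrite diag_false // mulr0 subrr.
have z10 : z1 = 0.
  rewrite ez1; under eq_bigr => p _ do under eq_bigr => q pq do rewrite off //.
  exact: vsum0.
have sumj : forall j, j != o -> \sum_(j' | j' != o) ((if (j == o) && (j == o) then c j' else 0)
                        - s j' * (if (j == j') && (j == j') then c j' else 0)) = - (s j * c j).
  move=> j jo; rewrite (bigD1 j) //= !eqxx (negbTE jo) /= sub0r big1 ?addr0 // => j' /andP[_ jj'].
  by rewrite eq_sym (negbTE jj') /= mulr0 subrr.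
have cj : forall j, j != o -> j != e -> c j = 0.
  move=> j jo je; have := ent j j; rewrite hd1 add0r (negbTE je) /= mulr0 add0r sumj //.
  by move/eqP; rewrite oppr_eq0 => /eqP /sA_cancel.
have eo : e != o by rewrite eq_sym.
have ce : c e = 0.
  have := ent o o; rewrite hd1 add0r (negbTE (_ : o != e)) // mulr0 add0r eqxx /=.
  rewrite (bigD1 e) //= ?eqxx (negbTE oe) /= mulr0 subr0 big1 ?addr0 // => j /andP[jo je].
  by rewrite (eq_sym o j) (negbTE jo) /= mulr0 subr0 cj.
have dx : d1 x = 0.
  have := ent e e; rewrite hd1 add0r eqxx /= sumj // ce mulr0 oppr0 addr0.
  exact: sA_cancel.
exists x; split => //.
rewrite ez z10 add0r big1 ?addr0 // => j jo.
have oj : o != j by rewrite eq_sym.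
case: (eqVneq j e) => [->|je]; first by rewrite ce; exact: (kl_0 (hLr HL HR 1 oe)).
rewrite cj //; exact: (kl_0 (hLr HL HR 1 oj)).
Qed.

Variables (T3 : lmodType K) (t3 : A -> A -> A -> T3) (d2 : T3 -> T2).
Hypotheses (hT3 : is_tensor3 t3) (d2L : klinear d2)
  (d2_def : forall a0 a1 a2,
      d2 (t3 a0 a1 a2) = t2 (a0 * a1) a2 - t2 a0 (a1 * a2) - t2 a1 (a2 * a0)).

Lemma g_d2_zero y : g (d2 y) = 0.
Proof.
have l1 : klinear (fun y => g (d2 y)) by move=> k a b; rewrite d2L gl.
have l2 : klinear (fun _ : T3 => (0 : L)) by move=> k a b; rewrite scaler0 addr0.
apply: (tensor3_ext hT3 l1 l2) => a b c /=.
by rewrite d2_def !(kl_B gl) (g_d2 HL HR hmn oe gdef).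
Qed.

Lemma t21_Im c : Imd2 d2 (t2 1 c).
Proof. exists (- t3 1 1 c); rewrite (kl_N d2L) d2_def !mul1r mulr1; by rewrite subrr sub0r opprK. Qed.

Lemma inj x : g x = 0 -> Imd2 d2 x.
Proof.
move=> gx.
have t2B : is_bilinear t2 by case: hT2.
case: HS => _ _ HU.
have [f [[fl fbr fp] fv _]] := HU _ _ _ _ (leibM m n t2B d2L d2_def) (relM m n t2B d2L).
pose P := pi (ImS d2L).
have key : forall x, (f (g x)).2 = sg K o *: P x.
  have l1 : klinear (fun x => (f (g x)).2) by move=> k a b; rewrite gl fl.
  have l2 : klinear (fun x => sg K o *: P x).
    by move=> k a b; rewrite /P piL scalerDr !scalerA mulrC.
  apply: (tensor2_ext hT2 l1 l2) => a b /=.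
  have eo : e != o by rewrite eq_sym.
  rewrite gdef (kl_B fl) /h !fbr !fv //.
  rewrite /= !ct_E // !eqxx /= !piZ'.
  have -> : pi (ImS d2L) (t2 1 (a * b)) = 0 by apply/pi0; exact: t21_Im.
  by rewrite scaler0 subr0.
have := key x; rewrite gx (kl_0 fl) => /esym h0.
apply/(pi0 (ImS d2L)).
have := congr1 (fun q => sg K o *: q) h0; rewrite scaler0 scalerA.
rewrite /sg sgn_sq scale1r.
by [].  
Qed.
End Final.

Theorem theorem4p2
  (K : fieldType) (A : algType K) (m n : nat)
  (* standing assumption of the paper *)
  (hK2 : 2%N \notin [pchar K]) (hK3 : 3%N \notin [pchar K])
  (* hypotheses of the theorem *)
  (hmn : (3 <= m + n)%N)
  (h4 : (m + n)%N = 4%N -> 2%N \notin [pchar K])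
  (h3 : (m + n)%N = 3%N -> 3%N \notin [pchar K])
  (* stl(m,n,A) *)
  (L : lmodType K) (p0 : L -> L) (br : L -> L -> L)
  (v : 'I_(m + n) -> 'I_(m + n) -> A -> L)
  (hL : is_stl p0 br v)
  (* psi : stl(m,n,A) -> gl(m,n,A), v_ij(a) |-> E_ij(a) *)
  (psi : L -> 'M[A]_(m + n))
  (psi_lin : forall (k : K) x y, psi (k *: x + y) = (k%:A) *: psi x + psi y)
  (psi_br : forall x y, psi (br x y) = superbr (psi x) (psi y))
  (psi_v : forall i j a, i != j -> psi (v i j a) = Eunit i j a)
  (* A (x) A and A (x) A (x) A, and the Hochschild differentials *)
  (T2 : lmodType K) (t2 : A -> A -> T2) (hT2 : is_tensor2 t2)
  (T3 : lmodType K) (t3 : A -> A -> A -> T3) (hT3 : is_tensor3 t3)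
  (d1 : T2 -> A) (d1_lin : klinear d1)
  (d1_def : forall a0 a1, d1 (t2 a0 a1) = a0 * a1 - a1 * a0)
  (d2 : T3 -> T2) (d2_lin : klinear d2)
  (d2_def : forall a0 a1 a2,
      d2 (t3 a0 a1 a2) = t2 (a0 * a1) a2 - t2 a0 (a1 * a2) - t2 a1 (a2 * a0)) :
  quot_iso d1 d2 (fun z : L => psi z = 0).
Proof.
have hN0 : (0 < m + n)%N by apply: leq_trans hmn.
have hN1 : (1 < m + n)%N by apply: leq_trans hmn.
pose o : 'I_(m + n) := Ordinal hN0; pose e : 'I_(m + n) := Ordinal hN1.
have oe : o != e by rewrite -val_eqE.
have [HL HR _] := hL.
pose h0 := fun a b => h br v o e a b - h br v o e 1 (a * b).
have h0B : is_bilinear h0.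
  split => [b|a] k x y; rewrite /h0.
  - rewrite (hLl HL HR b oe) mulrDl -scalerAl (hLr HL HR 1 oe) scalerBr; zsolve.
  - rewrite (hLr HL HR a oe) mulrDr -scalerAr (hLr HL HR 1 oe) scalerBr; zsolve.
have [t2B U2] := hT2.
have [g [gl gdef _]] := U2 L h0 h0B.
exists g; split.
- move=> k x y _ _; exact: gl.
- move=> x dx; rewrite (psi_g psi_lin psi_br psi_v oe gl gdef hT2 d1_lin d1_def) dx.
  have -> : Eunit e e (0 : A) = 0 by apply/matrixP => p q; rewrite !mxE; case: ifP.
  by rewrite scaler0.
- move=> z hz; exact: (surj hL HL HR hmn psi_lin psi_br psi_v oe gl gdef hT2 d1_lin d1_def hz).
- move=> x dx; split.
    move=> gx; exact: (inj hL oe gl gdef hT2 d2_lin d2_def gx).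
  by case=> y ->; exact: (g_d2_zero HL HR hmn oe gl gdef hT3 d2_lin d2_def).
Qed.
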